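(* Let $f(x)=\dfrac{1}{x^2-1}$, viewed as a map on $\mathbb{C}\setminus\{-1,1\}$, and consider the difference equation $x_{n+1}=f(x_n)$ over $\mathbb{C}$. Define, for $x\in\mathbb{C}\setminus\{0\}$, $$h_+(x)=\sqrt{\tfrac1x+1},\qquad h_-(x)=-\sqrt{\tfrac1x+1},$$ where $\sqrt{\cdot}$ denotes the principal branch of the complex square root. For $n\geq1$ and letters $a_1,\ldots,a_n\in\{h_+,h_-\}$, write $a_1\ldots a_n$ for the number $a_1\circ a_2\circ\cdots\circ a_n(1)$. Then: (i) the unique point $x\in\mathbb{C}$ with $f(x)=-1$ is $x=0$, and $0$ has no preimage under $f$; (ii) the points $x$ with $f^m(x)=1$ for some $m\geq1$ (all intermediate iterates being defined) are exactly the numbers $a_1\ldots a_n$ with $n\geq1$ and $a_i\in\{h_+,h_-\}$; (iii) every such word $a_1\ldots a_n$ is well defined in $\mathbb{C}$, that is, all the intermediate compositions are nonzero, and in particular $a_1\ldots a_n\neq0$; (iv) the representation is unique: if $a_1\ldots a_n=b_1\ldots b_m$ with all $a_i,b_j\in\{h_+,h_-\}$, then $n=m$ and $a_i=b_i$ for $i=1,\ldots,n$. Consequently the forbidden set of the equation over $\mathbb{C}$ is $$\mathcal F=\{-1,0,1\}\cup\{a_1\ldots a_n:\ n\in\mathbb{N},\ n\geq1,\ a_i\in\{h_+,h_-\}\}.$$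
   Context: For the difference equation $x_{n+1}=f(x_n)$ with $f$ defined on $A=\mathbb{C}\setminus\{-1,1\}$ (the poles of $f$ being $\pm1$), the forbidden set $\mathcal F$ is the set of initial conditions $x_0\in\mathbb{C}$ for which some iterate $x_n$ ($n\geq0$) of the recursion lands on a pole $\pm1$, so that $x_{n+1}$ is not defined; it includes the poles themselves. The principal square root of $w\neq0$ is the square root with argument in $(-\pi/2,\pi/2]$, and $\sqrt0=0$. *)

(* Defs.v *)
(* complex numbers are R[i] (mathcomp-real-closed) over a
   real number type R : realType (mathcomp-analysis); sqrtc is the principal
   square root (real part >= 0, argument in (-pi/2, pi/2]). *)
From HB Require Import structures.
From mathcomp Require Import all_boot all_order all_algebra.
From mathcomp Require Import reals.
From mathcomp Require Import complex.
Set Implicit Arguments. Unset Strict Implicit. Unset Printing Implicit Defensive.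
Import Order.TTheory GRing.Theory Num.Theory.
Local Open Scope ring_scope.
Local Open Scope complex_scope.

Section Defs.
Variable R : realType.

Definition fmap (x : R[i]) : R[i] := (x ^+ 2 - 1)^-1.

Definition is_pole (x : R[i]) : Prop := x = 1 \/ x = -1.

(* the iterates x_0, ..., x_{m-1} are all defined and not poles,
   so that x_0, ..., x_m are all defined *)
Definition defined_upto (x : R[i]) (m : nat) : Prop :=
  forall k, (k < m)%N -> ~ is_pole (iter k fmap x).

Definition forbidden (x : R[i]) : Prop :=
  exists n : nat, defined_upto x n /\ is_pole (iter n fmap x).

Definition hp (x : R[i]) : R[i] := sqrtc (x^-1 + 1).
Definition hm (x : R[i]) : R[i] := - sqrtc (x^-1 + 1).
Definition hlet (b : bool) : R[i] -> R[i] := if b then hp else hm.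

Definition word (w : seq bool) : R[i] := foldr hlet 1 w.
End Defs.

(* Main.v *)
Require Import Defs.
From HB Require Import structures.
From mathcomp Require Import all_boot all_order all_algebra.
From mathcomp Require Import reals.
From mathcomp Require Import complex.
Import Order.TTheory GRing.Theory Num.Theory.
Local Open Scope ring_scope.
Local Open Scope complex_scope.

Section S.
Variable R : realType.

Lemma fmap_hlet b (y : R[i]) : fmap (hlet b y) = y.
Proof.
rewrite /fmap; case: b => /=; rewrite /hp /hm ?sqrrN sqr_sqrtc addrK invrK //.
Qed.

Lemma inv1_ne0 (y : R[i]) : y <> -1 -> y^-1 + 1 != 0.
Proof.
move=> hy; apply/negP; rewrite addr_eq0 => /eqP h; apply: hy.
by rewrite -[y]invrK h invrN1.
Qed.

Lemma word_cons b w : word R (b :: w) = hlet b (word R w).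
Proof. by []. Qed.

Lemma word_props (w : seq bool) : word R w <> 0 /\ word R w <> -1.
Proof.
elim: w => [|b w [IH0 IH1]] /=.
  split=> /eqP; rewrite ?oner_eq0 //.
  by rewrite -subr_eq0 opprK (_ : 1 + 1 = 2%:R :> R[i]) // pnatr_eq0.
have z0 : (word R w)^-1 + 1 != 0.
  exact: inv1_ne0.
have w0 : (word R w)^-1 != 0 by rewrite invr_eq0; apply/eqP.
case: b; rewrite /hlet /hp /hm; split.
- by move/eqP; rewrite sqrtc_eq0 (negPf z0).
- move=> h; have := sqr_sqrtc ((word R w)^-1 + 1); rewrite h sqrrN expr1n.
  move/eqP; rewrite eq_sym -subr_eq0 addrK => /eqP h2; move: w0; by rewrite h2 eqxx.
- by move/eqP; rewrite oppr_eq0 sqrtc_eq0 (negPf z0).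
- move/eqP; rewrite eqr_opp => /eqP h; have := sqr_sqrtc ((word R w)^-1 + 1); rewrite h expr1n.
  move/eqP; rewrite eq_sym -subr_eq0 addrK => /eqP h2; move: w0; by rewrite h2 eqxx.
Qed.

Lemma word_ne1 b w : word R (b :: w) <> 1.
Proof.
have [IH0 _] := word_props w.
have w0 : (word R w)^-1 != 0 by rewrite invr_eq0; apply/eqP.
rewrite /= /hlet; case: b; rewrite /hp /hm => h;
  have := sqr_sqrtc ((word R w)^-1 + 1).
- rewrite h expr1n; move/eqP; rewrite eq_sym -subr_eq0 addrK => /eqP h2; move: w0; by rewrite h2 eqxx.
- have h' : sqrtc ((word R w)^-1 + 1) = -1 by apply: oppr_inj; rewrite opprK.
  rewrite h' sqrrN expr1n; move/eqP; rewrite eq_sym -subr_eq0 addrK => /eqP h2; move: w0; by rewrite h2 eqxx.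
Qed.

Lemma nonpole_word b w : ~ is_pole (word R (b :: w)).
Proof. by case=> h; [apply: (@word_ne1 b w h) | apply: (proj2 (word_props (b :: w)) h)]. Qed.

Lemma iter_word k w : (k <= size w)%N -> iter k (@fmap R) (word R w) = word R (drop k w).
Proof.
elim: k w => [|k IH] [|b w] // hk.
by rewrite iterSr fmap_hlet IH.
Qed.

Lemma word_inj v w : word R v = word R w -> v = w.
Proof.
elim: v w => [|b v IH] [|c w] //.
- by move=> h; exfalso; apply: (@word_ne1 c w); rewrite -h.
- by move=> h; exfalso; apply: (@word_ne1 b v); rewrite h.
move=> h; have e : v = w.
  by apply: IH; have := congr1 (@fmap R) h; rewrite !word_cons !fmap_hlet.
subst w; congr (_ :: _).
have [_ N1] := word_props v.
have z0 : (word R v)^-1 + 1 != 0.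
  exact: inv1_ne0.
move: h; rewrite /= /hlet.
have key : forall s : R[i], s = - s -> s = 0.
  move=> s hs; have : s *+ 2 == 0 by rewrite mulr2n {1}hs addNr.
  by rewrite mulrn_eq0 /= => /eqP.
case: b; case: c; rewrite /hp /hm // => h; exfalso; move: z0; rewrite -sqrtc_eq0 ?key //;
  [by rewrite (key _ h) eqxx | by rewrite (key _ (esym h)) eqxx].
Qed.

Lemma sq_roots (x z : R[i]) : x ^+ 2 = z -> x = sqrtc z \/ x = - sqrtc z.
Proof.
move=> h.
have : (x - sqrtc z) * (x + sqrtc z) = 0.
  by rewrite mulrDr !mulrBl -expr2 [sqrtc z * x]mulrC addrA subrK -expr2 sqr_sqrtc h subrr.
move/eqP; rewrite mulf_eq0 => /orP [] /eqP h2; [left | right].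
  by apply/eqP; rewrite -subr_eq0 h2.
by apply/eqP; rewrite -subr_eq0 opprK h2.
Qed.

Lemma back m (x : R[i]) : defined_upto x m -> iter m (@fmap R) x = 1 ->
  exists w, size w = m /\ x = word R w.
Proof.
elim: m x => [|m IH] x hd hi; first by exists [::].
have hd' : defined_upto (fmap x) m.
  by move=> k hk; rewrite -iterSr; apply: hd.
rewrite iterSr in hi; have [w [sw ew]] := IH _ hd' hi.
have np : ~ is_pole x by apply: (hd 0).
have hx : x ^+ 2 - 1 != 0.
  apply/negP; rewrite subr_eq0 -(expr1n _ 2) eqf_sqr => /orP [] /eqP h; apply: np;
    [left | right] => //.
have [W0 _] := word_props w.
have : x ^+ 2 = (word R w)^-1 + 1.
  by rewrite -ew /fmap invrK subrK.
move/sq_roots => [] h; [exists (true :: w) | exists (false :: w)]; by rewrite /= sw.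
Qed.

End S.

Theorem mainTheorem1 (R : realType) :
  (* (i) *)
  ((forall x : R[i], ~ is_pole x -> (fmap x = -1 <-> x = 0)) /\
   (forall x : R[i], ~ is_pole x -> fmap x <> 0)) /\
  (* (ii) *)
  (forall x : R[i],
     (exists m : nat, (1 <= m)%N /\ defined_upto x m /\ iter m (@fmap R) x = 1)
     <-> (exists w : seq bool, (1 <= size w)%N /\ x = word R w)) /\
  (* (iii) *)
  (forall w : seq bool, (1 <= size w)%N ->
     forall k : nat, (k < size w)%N -> word R (drop k w) <> 0) /\
  (* (iv) *)
  (forall v w : seq bool, (1 <= size v)%N -> (1 <= size w)%N ->
     word R v = word R w -> v = w) /\
  (* consequence: the forbidden set *)
  (forall x : R[i], forbidden x <->
     (x = -1 \/ x = 0 \/ x = 1 \/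
      exists w : seq bool, (1 <= size w)%N /\ x = word R w)).
Proof.
have nz : forall x : R[i], ~ is_pole x -> x ^+ 2 - 1 != 0.
  move=> x np; apply/negP; rewrite subr_eq0 -(expr1n _ 2) eqf_sqr => /orP [] /eqP h; apply: np;
    [left | right] => //.
have I1 : forall x : R[i], ~ is_pole x -> (fmap x = -1 <-> x = 0).
  move=> x np; rewrite /fmap; split.
    move=> h; have : x ^+ 2 - 1 = -1 by rewrite -[x ^+ 2 - 1]invrK h invrN1.
    move/eqP; rewrite -subr_eq0 opprK subrK expf_eq0 /= => /eqP //.
  by move=> ->; rewrite expr0n /= sub0r invrN1.
have I2 : forall x : R[i], ~ is_pole x -> fmap x <> 0.
  by move=> x np /eqP; rewrite /fmap invr_eq0 (negPf (nz x np)).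
have fwd : forall w, (1 <= size w)%N -> defined_upto (word R w) (size w) /\
    iter (size w) (@fmap R) (word R w) = 1.
  move=> w _; split; last by rewrite iter_word // drop_size.
  move=> k hk; rewrite iter_word; last exact: ltnW.
  move: (drop_nth false hk) => ->; exact: nonpole_word.
have II : forall x : R[i],
     (exists m : nat, (1 <= m)%N /\ defined_upto x m /\ iter m (@fmap R) x = 1)
     <-> (exists w : seq bool, (1 <= size w)%N /\ x = word R w).
  move=> x; split.
    move=> [m [m1 [hd hi]]]; have [w [sw ew]] := @back R m x hd hi.
    by exists w; rewrite sw.
  move=> [w [sw ->]]; exists (size w); split; [exact: sw | exact: fwd].
split; first by split.
split; first exact: II.
split.
  move=> w _ k hk; exact: (proj1 (word_props _ _)).
split; first by move=> v w _ _; apply: word_inj.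
move=> x; split.
  move=> [[|n] [hd hp]].
    by case: hp => /= ->; [right; right; left | left].
  case: hp => hp.
    by right; right; right; apply/II; exists n.+1; split; [exact: ltn0Sn | split].
  rewrite iterS in hp.
  have e0 : iter n (@fmap R) x = 0 by apply/(I1 _ (hd n (ltnSn n))).
  case: n hd hp e0 => [|n] hd hp e0; first by right; left.
  exfalso; rewrite iterS in e0; apply: (I2 _ (hd n (ltnW (ltnSn n)))) e0.
move=> [->|[->|[->|hw]]].
- exists 0%N; split; [by move=> k | by right].
- exists 1%N; split.
    move=> k; rewrite ltnS leqn0 => /eqP -> /=; case=> /eqP;
      rewrite eq_sym ?oppr_eq0 oner_eq0 //.
  by right; rewrite /= /fmap expr0n /= sub0r invrN1.
- exists 0%N; split; [by move=> k | by left].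
- move/II: hw => [m [_ [hd hi]]]; exists m; split; [exact: hd | by left].
Qed.
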